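(* Let $N\ge3$ be odd. For every $s\in(1,2^{(N-1)/2})$ there exists $\theta_s\in\mathcal G$ such that $s=\langle M_N(\theta_s)\rangle$ if $N\equiv3\pmod4$, and $s=\langle\tilde M_N(\theta_s)\rangle$ if $N\equiv1\pmod 4$.
   Context: $\mathcal G=(\pi/4,\pi/2)\cup(\pi/2,3\pi/4)\cup(5\pi/4,3\pi/2)\cup(3\pi/2,7\pi/4)$. For $\bm x\in\{0,1\}^N$ let $|\bm x|=\sum_kx_k$, $c_{\bm x}=\cos\big[\frac\pi2\big(\frac{N-1}2-|\bm x|\big)\big]$. The MABK expression is $\langle M_N\rangle=2^{(1-N)/2}\sum_{\bm x}c_{\bm x}\langle A^{(1)}_{x_1}\cdots A^{(N)}_{x_N}\rangle$, with quantum maximum $2^{(N-1)/2}$. Consider the strategy with state $(|0\rangle^{\otimes N}+i|1\rangle^{\otimes N})/\sqrt2$ and $A^{(k)}_0=\sigma_X$, $A^{(k)}_1=\cos\theta\sigma_X+\sin\theta\sigma_Y$ for all $k$; its full correlator at input $\bm x$ is $\sin(|\bm x|\theta)$. Define $\langle M_N(\theta)\rangle:=2^{(1-N)/2}\sum_{\bm x}c_{\bm x}\sin(|\bm x|\theta)$ (its MABK value), and $\langle\tilde M_N(\theta)\rangle$ as the value on this strategy of the relabelled MABK expression obtained by substituting $A^{(k)}_0\mapsto A^{(k)}_1$, $A^{(k)}_1\mapsto -A^{(k)}_0$ for every party, i.e. $\langle\tilde M_N(\theta)\rangle=2^{(1-N)/2}\sum_{\bm x}c_{\bm x}(-1)^{|\bm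 x|}\sin((N-|\bm x|)\theta)$. *)

(* Defs.v *)
From Stdlib Require Import Reals List Lra.
Import ListNotations.
Open Scope R_scope.

Fixpoint bitstrings (n : nat) : list (list bool) :=
  match n with
  | O => [ [] ]
  | S m => map (cons false) (bitstrings m) ++ map (cons true) (bitstrings m)
  end.

Definition weight (x : list bool) : nat := count_occ Bool.bool_dec x true.

Definition cx (N : nat) (x : list bool) : R :=
  cos (PI / 2 * ((INR N - 1) / 2 - INR (weight x))).

Definition sum_bits (N : nat) (f : list bool -> R) : R :=
  fold_right Rplus 0 (map f (bitstrings N)).

Definition MABK (N : nat) (theta : R) : R :=
  Rpower 2 ((1 - INR N) / 2) *
  sum_bits N (fun x => cx N x * sin (INR (weight x) * theta)).

Definition MABK_tilde (N : nat) (theta : R) : R :=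
  Rpower 2 ((1 - INR N) / 2) *
  sum_bits N (fun x => cx N x * (-1) ^ (weight x) *
                       sin ((INR N - INR (weight x)) * theta)).

Definition in_G (t : R) : Prop :=
  (PI / 4 < t < PI / 2) \/ (PI / 2 < t < 3 * PI / 4) \/
  (5 * PI / 4 < t < 3 * PI / 2) \/ (3 * PI / 2 < t < 7 * PI / 4).

(* Main.v *)
Require Import Defs.
From Stdlib Require Import Reals Arith Lra Lia List.
Import ListNotations.
Open Scope R_scope.

Lemma sumR_app (f : list bool -> R) l1 l2 :
  fold_right Rplus 0 (map f (l1 ++ l2)) =
  fold_right Rplus 0 (map f l1) + fold_right Rplus 0 (map f l2).
Proof. induction l1; simpl; [ring | rewrite IHl1; ring]. Qed.

Lemma sumR_lin (f g : list bool -> R) a c l :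
  fold_right Rplus 0 (map (fun x => a * f x + c * g x) l) =
  a * fold_right Rplus 0 (map f l) + c * fold_right Rplus 0 (map g l).
Proof. induction l; simpl; [ring | rewrite IHl; ring]. Qed.

Lemma sumR_ext (f g : list bool -> R) l :
  (forall x, f x = g x) ->
  fold_right Rplus 0 (map f l) = fold_right Rplus 0 (map g l).
Proof. intro H; induction l; simpl; [ring | rewrite IHl, H; ring]. Qed.

Lemma weight_false x : weight (false :: x) = weight x.
Proof. unfold weight; simpl. reflexivity. Qed.
Lemma weight_true x : weight (true :: x) = S (weight x).
Proof. unfold weight; simpl. reflexivity. Qed.

Lemma sum_bits_S n f :
  sum_bits (S n) f = sum_bits n (fun x => f (false :: x)) + sum_bits n (fun x => f (true :: x)).
Proof.
  unfold sum_bits; simpl. rewrite sumR_app, !map_map. reflexivity.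
Qed.

Lemma H_closed n : forall d phi,
  sum_bits n (fun x => sin (d + INR (weight x) * phi)) =
  (2 * cos (phi / 2)) ^ n * sin (d + INR n * phi / 2).
Proof.
  induction n; intros d phi.
  - unfold sum_bits; simpl. unfold weight; simpl. replace (d + 0 * phi) with d by ring.
    replace (d + 0 * phi / 2) with d by field. ring.
  - rewrite sum_bits_S.
    replace (sum_bits n (fun x => sin (d + INR (weight (false :: x)) * phi)))
      with (sum_bits n (fun x => sin (d + INR (weight x) * phi)))
      by (unfold sum_bits; apply sumR_ext; intro x; rewrite weight_false; reflexivity).
    replace (sum_bits n (fun x => sin (d + INR (weight (true :: x)) * phi)))
      with (sum_bits n (fun x => sin ((d + phi) + INR (weight x) * phi)))
      by (unfold sum_bits; apply sumR_ext; intro x; rewrite weight_true, S_INR; f_equal; ring).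
    rewrite !IHn, S_INR.
    set (u := d + (INR n + 1) * phi / 2).
    replace (d + INR n * phi / 2) with (u - phi / 2) by (unfold u; field).
    replace (d + phi + INR n * phi / 2) with (u + phi / 2) by (unfold u; field).
    rewrite sin_minus, sin_plus. simpl. ring.
Qed.

Definition Kc (N : nat) : R := Rpower 2 ((INR N - 1) / 2).
Definition Sf (N : nat) (b t : R) : R :=
  cos ((t - PI/2)/2) ^ N * sin (b + INR N * (t - PI/2) / 2) +
  cos ((t + PI/2)/2) ^ N * sin (INR N * (t + PI/2) / 2 - b).

Lemma K_eq N : Rpower 2 ((1 - INR N) / 2) * / 2 * 2 ^ N = Kc N.
Proof.
  unfold Kc. rewrite <- Rpower_pow by lra.
  assert (H2 : / 2 = Rpower 2 (Ropp 1)) by (rewrite Rpower_Ropp, Rpower_1 by lra; reflexivity).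
  rewrite H2, <- !Rpower_plus. f_equal. field.
Qed.

Lemma MABK_closed N t : MABK N t = Kc N * Sf N (PI/2*((INR N - 1)/2)) t.
Proof.
  unfold MABK. set (b := PI/2*((INR N - 1)/2)).
  unfold sum_bits.
  rewrite (sumR_ext _ (fun x => /2 * sin (b + INR (weight x) * (t - PI/2)) +
                                /2 * sin (-b + INR (weight x) * (t + PI/2)))).
  2:{ intro x. unfold cx. set (w := INR (weight x)).
      replace (b + w * (t - PI/2)) with (w * t + PI / 2 * ((INR N - 1) / 2 - w)) by (unfold b; ring).
      replace (-b + w * (t + PI/2)) with (w * t - PI / 2 * ((INR N - 1) / 2 - w)) by (unfold b; ring).
      rewrite sin_plus, sin_minus. field. }
  rewrite sumR_lin. fold (sum_bits N (fun x => sin (b + INR (weight x) * (t - PI / 2)))).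
  fold (sum_bits N (fun x => sin (-b + INR (weight x) * (t + PI / 2)))).
  rewrite !H_closed. rewrite <- K_eq. unfold Sf. rewrite !Rpow_mult_distr.
  replace (-b + INR N * (t + PI / 2) / 2) with (INR N * (t + PI / 2) / 2 - b) by ring.
  replace (b + INR N * (t - PI / 2) / 2) with (b + INR N * (t - PI / 2) / 2) by ring.
  ring.
Qed.

Lemma negpow_cos k y : (-1) ^ k * cos y = cos (y + INR k * PI).
Proof.
  induction k.
  - simpl. replace (y + 0 * PI) with y by ring. ring.
  - rewrite S_INR. replace (y + (INR k + 1) * PI) with ((y + INR k * PI) + PI) by ring.
    rewrite neg_cos, <- IHk. simpl. ring.
Qed.

Lemma tilde_closed N t :
  MABK_tilde N t = Kc N * Sf N (PI/2*((INR N - 1)/2) + INR N * PI / 2) t.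
Proof.
  unfold MABK_tilde. set (b := PI/2*((INR N - 1)/2)).
  unfold sum_bits.
  rewrite (sumR_ext _ (fun x => /2 * sin ((INR N * t + b) + INR (weight x) * (PI/2 - t)) +
                                /2 * sin ((INR N * t - b) + INR (weight x) * (-(t + PI/2))))).
  2:{ intro x. unfold cx. set (w := INR (weight x)).
      replace (cos (PI / 2 * ((INR N - 1) / 2 - w)) * (-1) ^ weight x)
        with ((-1) ^ weight x * cos (PI / 2 * ((INR N - 1) / 2 - w))) by ring.
      rewrite negpow_cos. fold w.
      replace (PI / 2 * ((INR N - 1) / 2 - w) + w * PI) with (b + w * (PI/2)) by (unfold b; field).
      replace (INR N * t + b + w * (PI / 2 - t)) with ((INR N - w) * t + (b + w * (PI/2))) by ring.
      replace (INR N * t - b + w * - (t + PI / 2)) with ((INR N - w) * t - (b + w * (PI/2))) by ring.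
      rewrite sin_plus, sin_minus. field. }
  rewrite sumR_lin.
  fold (sum_bits N (fun x => sin ((INR N * t + b) + INR (weight x) * (PI/2 - t)))).
  fold (sum_bits N (fun x => sin ((INR N * t - b) + INR (weight x) * (-(t + PI/2))))).
  rewrite !H_closed. rewrite <- K_eq. unfold Sf. rewrite !Rpow_mult_distr.
  replace ((PI / 2 - t) / 2) with (- ((t - PI/2)/2)) by field.
  replace (- (t + PI / 2) / 2) with (- ((t + PI/2)/2)) by field.
  rewrite !cos_neg.
  replace (INR N * t + b + INR N * (PI / 2 - t) / 2) with
    (b + INR N * PI / 2 + INR N * (t - PI / 2) / 2) by field.
  replace (INR N * t - b + INR N * - (t + PI / 2) / 2) with
    (INR N * (t + PI / 2) / 2 - (b + INR N * PI / 2)) by field.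
  ring.
Qed.

Lemma INR_odd k : INR (2 * k + 1) = 2 * INR k + 1.
Proof. rewrite plus_INR, mult_INR. simpl. ring. Qed.

Lemma pow_odd_m1 k : (-1) ^ (2 * k + 1) = -1.
Proof. replace (2 * k + 1)%nat with (S (2 * k)) by lia. apply pow_1_odd. Qed.

Lemma cos_PI2_plus x : cos (PI/2 + x) = - sin x.
Proof. rewrite (sin_cos x). ring. Qed.

Lemma sin_plus_PI2 x : sin (x + PI/2) = cos x.
Proof. rewrite sin_plus, sin_PI2, cos_PI2. ring. Qed.

Lemma abs_bound (a c s1 s2 : R) N :
  Rabs (a ^ N * s1 + c ^ N * s2) <= Rabs a ^ N * Rabs s1 + Rabs c ^ N * Rabs s2.
Proof.
  eapply Rle_trans; [apply Rabs_triang|]. rewrite !Rabs_mult, <- !RPow_abs. lra.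
Qed.

Lemma Ev1 N b : (1 <= N)%nat -> Sf N b (PI/2) = sin b.
Proof.
  intro HN. unfold Sf.
  replace ((PI/2 - PI/2)/2) with 0 by field. replace (b + INR N * (PI / 2 - PI / 2) / 2) with b by field.
  replace ((PI / 2 + PI / 2) / 2) with (PI/2) by field.
  rewrite cos_0, cos_PI2, pow1, pow_i by lia. ring.
Qed.

Lemma Ev2 k b : Sf (2*k+1) b (3*PI/2) = - sin b.
Proof.
  unfold Sf.
  replace ((3*PI/2 - PI/2)/2) with (PI/2) by field.
  replace ((3*PI/2 + PI/2)/2) with PI by field.
  rewrite cos_PI2, cos_PI, pow_i by lia. rewrite pow_odd_m1, INR_odd.
  replace ((2 * INR k + 1) * (3 * PI / 2 + PI / 2) / 2 - b) with ((PI - b) + 2 * INR k * PI) by field.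
  rewrite sin_period, sin_PI_x. ring.
Qed.

Lemma small_sin N : (1 <= N)%nat -> Rabs (sin (PI / (2 * INR N))) <= PI / (2 * INR N).
Proof.
  intro HN. assert (H1 : 1 <= INR N) by (apply (le_INR 1); lia).
  assert (H0 : 0 < PI / (2 * INR N)) by (apply Rdiv_lt_0_compat; [apply PI_RGT_0 | lra]).
  assert (H2 : PI / (2 * INR N) <= PI / 2).
  { unfold Rdiv. apply Rmult_le_compat_l; [left; apply PI_RGT_0|]. apply Rinv_le_contravar; lra. }
  rewrite Rabs_pos_eq.
  - left. apply sin_lt_x; auto.
  - left. apply sin_gt_0; auto. pose proof PI_RGT_0; lra.
Qed.

Lemma Ev3 N b : (1 <= N)%nat -> cos b = 0 ->
  Rabs (Sf N b (PI/2 + PI / INR N)) <= (PI / (2 * INR N)) ^ N.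
Proof.
  intros HN Hb. assert (H1 : 1 <= INR N) by (apply (le_INR 1); lia).
  unfold Sf.
  replace ((PI / 2 + PI / INR N - PI / 2) / 2) with (PI / (2 * INR N)) by (field; lra).
  replace (b + INR N * (PI / 2 + PI / INR N - PI / 2) / 2) with (b + PI/2) by (field; lra).
  replace ((PI / 2 + PI / INR N + PI / 2) / 2) with (PI/2 + PI / (2 * INR N)) by (field; lra).
  rewrite sin_plus_PI2, Hb, cos_PI2_plus.
  eapply Rle_trans; [apply abs_bound|].
  rewrite Rabs_R0, Rabs_Ropp. 
  assert (Hs := small_sin N HN).
  assert (Hs2 := SIN_bound (INR N * (PI / 2 + PI / INR N + PI / 2) / 2 - b)).
  assert (Hp : Rabs (sin (PI / (2 * INR N))) ^ N <= (PI / (2 * INR N)) ^ N).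
  { apply pow_incr. split; [apply Rabs_pos | exact Hs]. }
  assert (Ha : Rabs (sin (INR N * (PI / 2 + PI / INR N + PI / 2) / 2 - b)) <= 1).
  { apply Rabs_le; lra. }
  assert (0 <= Rabs (sin (PI / (2 * INR N))) ^ N) by (apply pow_le, Rabs_pos).
  nra.
Qed.

Lemma Ev4 k b : (1 <= k)%nat -> cos b = 0 ->
  Rabs (Sf (2*k+1) b (3*PI/2 + PI / INR (2*k+1))) <= (PI / (2 * INR (2*k+1))) ^ (2*k+1).
Proof.
  intros Hk Hb. set (N := (2*k+1)%nat).
  assert (HN : (1 <= N)%nat) by (unfold N; lia).
  assert (H1 : 1 <= INR N) by (apply (le_INR 1); lia).
  unfold Sf.
  replace ((3*PI / 2 + PI / INR N - PI / 2) / 2) with (PI/2 + PI / (2 * INR N)) by (field; lra).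
  replace ((3*PI / 2 + PI / INR N + PI / 2) / 2) with (PI + PI / (2 * INR N)) by (field; lra).
  replace (INR N * (3*PI / 2 + PI / INR N + PI / 2) / 2 - b) with
    (((PI/2 - b) + PI) + 2 * INR k * PI) by (unfold N; rewrite INR_odd; field; pose proof (pos_INR k); lra).
  rewrite sin_period, neg_sin, sin_shift, Hb, cos_PI2_plus.
  rewrite (Rplus_comm PI), neg_cos.
  eapply Rle_trans; [apply abs_bound|].
  rewrite Ropp_0, Rabs_R0, Rabs_Ropp.
  assert (Hs := small_sin N HN).
  assert (Hs2 := SIN_bound (b + INR N * (3 * PI / 2 + PI / INR N - PI / 2) / 2)).
  assert (Hp : Rabs (sin (PI / (2 * INR N))) ^ N <= (PI / (2 * INR N)) ^ N).
  { apply pow_incr. split; [apply Rabs_pos | exact Hs]. }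
  assert (Ha : Rabs (sin (b + INR N * (3 * PI / 2 + PI / INR N - PI / 2) / 2)) <= 1).
  { apply Rabs_le; lra. }
  assert (0 <= Rabs (sin (PI / (2 * INR N))) ^ N) by (apply pow_le, Rabs_pos).
  nra.
Qed.

Lemma negpow_sin k y : (-1) ^ k * sin y = sin (y + INR k * PI).
Proof.
  induction k.
  - simpl. replace (y + 0 * PI) with y by ring. ring.
  - rewrite S_INR. replace (y + (INR k + 1) * PI) with ((y + INR k * PI) + PI) by ring.
    rewrite neg_sin, <- IHk. simpl. ring.
Qed.

Lemma beta_cos j : cos (PI/2 + INR j * PI) = 0.
Proof. rewrite <- negpow_cos, cos_PI2. ring. Qed.

Lemma beta_sin j : sin (PI/2 + INR j * PI) = 1 \/ sin (PI/2 + INR j * PI) = -1.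
Proof.
  rewrite <- negpow_sin, sin_PI2, Rmult_1_r.
  induction j; simpl; [left; ring|]. destruct IHj as [-> | ->]; [right|left]; ring.
Qed.

Lemma Rabs_le_inv' x a : Rabs x <= a -> - a <= x <= a.
Proof. intro H. split; [pose proof (Rle_abs (-x)); rewrite Rabs_Ropp in H0 | pose proof (Rle_abs x)]; lra. Qed.

Lemma ivt_pick f t0 t1 K s : continuity f -> t0 < t1 -> f t0 = K -> Rabs (f t1) <= 1 ->
  1 < s < K -> exists t, t0 < t < t1 /\ f t = s.
Proof.
  intros Hc Ht H0 H1 Hs.
  destruct (IVT (fun t => s - f t) t0 t1) as [z [Hz Hfz]].
  - apply continuity_minus; [apply continuity_const; intros ? ?; reflexivity | exact Hc].
  - exact Ht.
  - lra.
  - apply Rabs_le_inv' in H1. lra.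
  - exists z. assert (f z = s) by lra.
    split; [| assumption]. split.
    + destruct (Req_dec z t0) as [->|]; [lra|lra].
    + destruct (Req_dec z t1) as [->|]; [apply Rabs_le_inv' in H1; lra|lra].
Qed.

Lemma cont_Sf N b : continuity (fun t => Kc N * Sf N b t).
Proof. unfold Sf. reg. Qed.

Lemma bound_small N : (5 <= N)%nat -> Kc N * (PI / (2 * INR N)) ^ N <= 1.
Proof.
  intro HN. assert (H5 : 5 <= INR N) by (replace 5 with (INR 5) by (simpl; lra); apply le_INR; lia).
  assert (HK : Kc N <= 2 ^ N).
  { unfold Kc. rewrite <- Rpower_pow by lra. apply Rle_Rpower; lra. }
  assert (HP : PI / (2 * INR N) <= 2/5).
  { pose proof PI_4. apply Rmult_le_reg_r with (2 * INR N); [lra|].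
    unfold Rdiv. rewrite Rmult_assoc, Rinv_l by lra. nra. }
  assert (H0 : 0 <= PI / (2 * INR N)).
  { left. apply Rdiv_lt_0_compat; [apply PI_RGT_0|lra]. }
  assert (Hq : (PI / (2 * INR N)) ^ N <= (2/5) ^ N) by (apply pow_incr; lra).
  assert (Hr : 2 ^ N * (2/5) ^ N <= 1).
  { rewrite <- Rpow_mult_distr. rewrite <- (pow1 N). apply pow_incr. lra. }
  assert (0 <= (PI / (2 * INR N)) ^ N) by (apply pow_le; lra).
  assert (0 <= Kc N) by (unfold Kc, Rpower; left; apply exp_pos).
  assert (0 <= 2 ^ N) by (apply pow_le; lra).
  nra.
Qed.

Lemma main_gen k j s : (2 <= k)%nat -> 1 < s < Kc (2*k+1) ->
  exists t, in_G t /\ Kc (2*k+1) * Sf (2*k+1) (PI/2 + INR j * PI) t = s.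
Proof.
  intros Hk Hs. set (N := (2*k+1)%nat).
  assert (HN : (5 <= N)%nat) by (unfold N; lia).
  assert (H5 : 5 <= INR N) by (replace 5 with (INR 5) by (simpl; lra); apply le_INR; lia).
  assert (HPN : 0 < PI / INR N <= PI / 4).
  { split. apply Rdiv_lt_0_compat; [apply PI_RGT_0|lra].
    unfold Rdiv. apply Rmult_le_compat_l; [left; apply PI_RGT_0|]. apply Rinv_le_contravar; lra. }
  pose proof PI_RGT_0.
  destruct (beta_sin j) as [Hb | Hb].
  - destruct (ivt_pick (fun t => Kc N * Sf N (PI/2 + INR j * PI) t) (PI/2) (PI/2 + PI / INR N)
       (Kc N) s) as [t [Ht Hft]].
    + apply cont_Sf.
    + lra.
    + cbv beta. rewrite Ev1 by lia. rewrite Hb. ring.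
    + cbv beta. rewrite Rabs_mult. rewrite (Rabs_pos_eq (Kc N)) by (unfold Kc, Rpower; left; apply exp_pos).
      eapply Rle_trans; [| apply (bound_small N HN)].
      apply Rmult_le_compat_l; [unfold Kc, Rpower; left; apply exp_pos|].
      apply Ev3; [lia | apply beta_cos].
    + exact Hs.
    + exists t. split; [|exact Hft]. unfold in_G. right; left. lra.
  - destruct (ivt_pick (fun t => Kc N * Sf N (PI/2 + INR j * PI) t) (3*PI/2) (3*PI/2 + PI / INR N)
       (Kc N) s) as [t [Ht Hft]].
    + apply cont_Sf.
    + lra.
    + cbv beta. unfold N. rewrite Ev2. rewrite Hb. ring.
    + cbv beta. rewrite Rabs_mult. rewrite (Rabs_pos_eq (Kc N)) by (unfold Kc, Rpower; left; apply exp_pos).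
      eapply Rle_trans; [| apply (bound_small N HN)].
      apply Rmult_le_compat_l; [unfold Kc, Rpower; left; apply exp_pos|].
      apply Ev4; [lia | apply beta_cos].
    + exact Hs.
    + exists t. split; [|exact Hft]. unfold in_G. right; right; right. lra.
Qed.

Lemma sqrt2_le : sqrt 2 <= 3/2.
Proof.
  pose proof (sqrt_sqrt 2 ltac:(lra)). pose proof (sqrt_pos 2). nra.
Qed.

Lemma sin_pi8_sq : sin (PI/8) * sin (PI/8) <= 1/6.
Proof.
  pose proof (cos_2a_sin (PI/8)) as H. replace (2 * (PI/8)) with (PI/4) in H by field.
  rewrite cos_PI4 in H. pose proof sqrt2_le. pose proof (sqrt_lt_R0 2 ltac:(lra)).
  assert (1 / sqrt 2 >= 2/3).
  { assert (E : 1 / sqrt 2 * sqrt 2 = 1) by (field; lra).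
    apply Rle_ge. apply Rmult_le_reg_r with (sqrt 2); [lra|]. rewrite E. nra. }
  lra.
Qed.

Lemma N3_bound : Rabs (Kc 3 * Sf 3 (PI/2) (3*PI/4)) <= 1.
Proof.
  assert (HK : Kc 3 = 2).
  { unfold Kc. replace ((INR 3 - 1)/2) with 1 by (simpl; field). apply Rpower_1; lra. }
  rewrite HK. unfold Sf. replace (INR 3) with 3 by (simpl; ring).
  replace ((3 * PI / 4 - PI / 2) / 2) with (PI/8) by field.
  replace (PI / 2 + 3 * (3 * PI / 4 - PI / 2) / 2) with (PI/2 - PI/8 + PI/2) by field.
  replace ((3 * PI / 4 + PI / 2) / 2) with (PI/2 + PI/8) by field.
  rewrite sin_plus_PI2, cos_shift, cos_PI2_plus.
  rewrite Rabs_mult, (Rabs_pos_eq 2) by lra.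
  assert (H := abs_bound (cos (PI/8)) (- sin (PI/8)) (sin (PI/8))
     (sin (3 * (3 * PI / 4 + PI / 2) / 2 - PI / 2)) 3).
  rewrite Rabs_Ropp in H.
  set (x := sin (3 * (3 * PI / 4 + PI / 2) / 2 - PI / 2)) in *.
  assert (Hx : Rabs x <= 1) by (pose proof (SIN_bound (3 * (3 * PI / 4 + PI / 2) / 2 - PI / 2));
     apply Rabs_le; fold x in H0; lra).
  assert (Hc : Rabs (cos (PI/8)) <= 1) by (apply Rabs_le; apply COS_bound).
  set (a := Rabs (sin (PI/8))) in *.
  assert (Ha : a * a <= 1/6).
  { unfold a. rewrite <- Rabs_mult. rewrite Rabs_pos_eq by nra. apply sin_pi8_sq. }
  assert (Ha0 : 0 <= a) by apply Rabs_pos.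
  assert (Hc0 : 0 <= Rabs (cos (PI/8))) by apply Rabs_pos.
  assert (Hc3 : Rabs (cos (PI/8)) ^ 3 <= 1).
  { rewrite <- (pow1 3). apply pow_incr. lra. }
  assert (0 <= Rabs x) by apply Rabs_pos.
  assert (0 <= Rabs (cos (PI/8)) ^ 3) by (apply pow_le; lra).
  assert (Ha1 : a <= 5/12) by (destruct (Rle_lt_dec a (5/12)) as [h|h]; [exact h| nra]).
  simpl in H. simpl in Hc3. simpl.
  set (C := Rabs (cos (PI / 8)) * (Rabs (cos (PI / 8)) * (Rabs (cos (PI / 8)) * 1))) in *.
  assert (h1 : C * a <= a) by nra.
  assert (h2 : a * (a * (a * 1)) * Rabs x <= a / 6).
  { assert (a * (a * (a * 1)) <= a / 6) by nra.
    assert (0 <= a * (a * (a * 1))) by (apply Rmult_le_pos; [lra| nra]). nra. }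
  lra.
Qed.

Theorem proposition5 (N : nat) :
  (3 <= N)%nat -> Nat.odd N = true ->
  forall s : R, 1 < s < Rpower 2 ((INR N - 1) / 2) ->
  exists theta : R, in_G theta /\
    ((N mod 4 = 3)%nat -> s = MABK N theta) /\
    ((N mod 4 = 1)%nat -> s = MABK_tilde N theta).
Proof.
  intros H3 Hodd s Hs.
  apply Nat.odd_spec in Hodd. destruct Hodd as [k Hk].
  fold (Kc N) in Hs.
  destruct (Nat.Even_or_Odd k) as [[m Hm]|[m Hm]]; subst N; subst k.
  - destruct (main_gen (2*m) (3*m) s ltac:(lia) Hs) as [t [HG Ht]].
    exists t. split; [exact HG|]. split.
    + intro Hc. exfalso. replace (2*(2*m)+1)%nat with (1 + m*4)%nat in Hc by lia.
      rewrite Nat.Div0.mod_add in Hc. simpl in Hc. discriminate.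
    + intros _. rewrite tilde_closed. rewrite <- Ht. f_equal. f_equal.
      rewrite INR_odd, !mult_INR. simpl. field.
  - destruct m as [|m].
    +
      simpl in Hs |- *.
      destruct (ivt_pick (fun t => Kc 3 * Sf 3 (PI/2) t) (PI/2) (3*PI/4) (Kc 3) s)
        as [t [Ht Hft]].
      * apply cont_Sf.
      * pose proof PI_RGT_0; lra.
      * cbv beta. rewrite Ev1 by lia. rewrite sin_PI2. ring.
      * apply N3_bound.
      * exact Hs.
      * exists t. split; [unfold in_G; right; left; lra|]. split.
        -- intros _. rewrite MABK_closed. rewrite <- Hft. f_equal. f_equal.
           simpl. field.
        -- intro Hc. exfalso. simpl in Hc. discriminate.
    + destruct (main_gen (2*(S m)+1) (S m) s ltac:(lia) Hs) as [t [HG Ht]].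
      exists t. split; [exact HG|]. split.
      * intros _. rewrite MABK_closed. rewrite <- Ht. f_equal. f_equal.
        rewrite !INR_odd. rewrite S_INR. field.
      * intro Hc. exfalso. replace (2*(2*S m+1)+1)%nat with (3 + (S m)*4)%nat in Hc by lia.
        rewrite Nat.Div0.mod_add in Hc. simpl in Hc. discriminate.
Qed.
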